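(* Let $W,V$ be subspaces of $\mathbb{C}^n$ with $\mathbb{C}^n=W\oplus V^\perp$, let $\{\mathbf{w}_i\}_{i=1}^N$ be a frame for $W$ with frame operator $\mathbf{S}=\sum_{i=1}^N\mathbf{w}_i\mathbf{w}_i^*$, and let $\{\mathbf{v}_i\}_{i=1}^N$ be an oblique dual frame of $\{\mathbf{w}_i\}_{i=1}^N$ on $V$. Let $p=2k$ where $k\ge1$, and let $d_W=\dim W$. Then $$\sum_{i=1}^N|\langle\mathbf{w}_i,\mathbf{v}_i\rangle|^p\ge N^{1-p}d_W^p\quad\text{and}\quad\sum_{i=1}^N\sum_{j=1}^N|\langle\mathbf{w}_i,\mathbf{v}_j\rangle|^p\ge N^{2-p}d_W^{p/2}.$$ Furthermore, when $k>1$, the first inequality is an equality if and only if $\langle\mathbf{w}_i,\mathbf{v}_i\rangle=\frac{d_W}{N}$ for all $i$, and the second inequality is an equality if and only if $|\langle\mathbf{w}_i,\mathbf{v}_j\rangle|$ is constant over all $i$ and $j$ and $\mathbf{v}_j=\boldsymbol{\pi}_{VW^\perp}\mathbf{S}^\dagger\mathbf{w}_j$ for each $j$.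
   Context: The inner product on $\mathbb{C}^n$ is $\langle\mathbf{x},\mathbf{y}\rangle=\mathbf{y}^*\mathbf{x}$. $\mathbf{S}^\dagger$ is the Moore–Penrose inverse. When $\mathbb{C}^n=W\oplus V^\perp$ (equivalently $\mathbb{C}^n=V\oplus W^\perp$), $\boldsymbol{\pi}_{WV^\perp}$ is the oblique projection onto $W$ along $V^\perp$ and $\boldsymbol{\pi}_{VW^\perp}$ the oblique projection onto $V$ along $W^\perp$. A finite family in $W$ is a frame for $W$ if it spans $W$. A frame $\{\mathbf{v}_i\}_{i=1}^N\subset V$ for $V$ is an oblique dual frame of $\{\mathbf{w}_i\}$ on $V$ if $\boldsymbol{\pi}_{WV^\perp}\mathbf{f}=\sum_{i=1}^N\langle\mathbf{f},\mathbf{v}_i\rangle\mathbf{w}_i$ for all $\mathbf{f}\in\mathbb{C}^n$. *)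

(* Defs.v *)
From HB Require Import structures.
From mathcomp Require Import all_boot all_order all_algebra.
Set Implicit Arguments. Unset Strict Implicit. Unset Printing Implicit Defensive.
Import Order.TTheory GRing.Theory Num.Theory.
Local Open Scope ring_scope.

(* Vectors of C^n are row vectors 'rV[C]_n; subspaces of C^n are row spaces
   of matrices (mxalgebra convention). *)

Section Defs.
Variable C : numClosedFieldType.

Definition ip n (x y : 'rV[C]_n) : C := \sum_(k < n) x 0 k * (y 0 k)^*.

Definition adjmx m n (A : 'M[C]_(m, n)) : 'M[C]_(n, m) := (map_mx Num.conj A)^T.

(* orthogonal complement of the row space of V: all u with <u, v> = 0
   for every row v of V, i.e. u *m V^* = 0 *)
Definition orthmx n (V : 'M[C]_n) : 'M[C]_n := kermx (adjmx V).

Definition is_MP_inverse n (S X : 'M[C]_n) : Prop :=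
  [/\ S *m X *m S = S, X *m S *m X = X,
      adjmx (S *m X) = S *m X & adjmx (X *m S) = X *m S].

(* the frame operator S f = \sum_i <f, w_i> w_i, in row-vector convention
   (f |-> f *m frame_op w) *)
Definition frame_op n N (w : 'I_N -> 'rV[C]_n) : 'M[C]_n :=
  \sum_(i < N) adjmx (w i) *m w i.

Definition is_frame n N (W : 'M[C]_n) (w : 'I_N -> 'rV[C]_n) : Prop :=
  (\matrix_(i < N) w i == W)%MS.

Definition oblique_proj n (W V : 'M[C]_n) : 'M[C]_n := proj_mx W (orthmx V).

Definition is_oblique_dual n N (W V : 'M[C]_n) (w v : 'I_N -> 'rV[C]_n) : Prop :=
  is_frame V v /\
  forall f : 'rV[C]_n, f *m oblique_proj W V = \sum_(i < N) ip f (v i) *: w i.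

End Defs.

(* Main.v *)
Require Import Defs.
From HB Require Import structures.
From mathcomp Require Import all_boot all_order all_algebra.
From mathcomp Require Import zify ring lra.
From mathcomp Require Import spectral sesquilinear.
Import Order.TTheory GRing.Theory Num.Theory.
Set Implicit Arguments. Unset Strict Implicit. Unset Printing Implicit Defensive.
Local Open Scope ring_scope.
Local Notation "M ^t*" := (M ^t Num.conj)%sesqui (at level 30).

Section Adj.
Variable C : numClosedFieldType.

Lemma adjmxE m n (A : 'M[C]_(m, n)) i j : adjmx A i j = (A j i)^*.
Proof. by rewrite /adjmx !mxE. Qed.

Lemma adjmxM m n p (A : 'M[C]_(m, n)) (B : 'M[C]_(n, p)) :
  adjmx (A *m B) = adjmx B *m adjmx A.
Proof. by rewrite /adjmx map_mxM trmx_mul. Qed.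

Lemma adjmxK m n (A : 'M[C]_(m, n)) : adjmx (adjmx A) = A.
Proof. by apply/matrixP => i j; rewrite !adjmxE conjCK. Qed.

Lemma adjmxD m n (A B : 'M[C]_(m, n)) : adjmx (A + B) = adjmx A + adjmx B.
Proof. by apply/matrixP => i j; rewrite !mxE rmorphD. Qed.

Lemma adjmxN m n (A : 'M[C]_(m, n)) : adjmx (- A) = - adjmx A.
Proof. by apply/matrixP => i j; rewrite !mxE rmorphN. Qed.

Lemma adjmxB m n (A B : 'M[C]_(m, n)) : adjmx (A - B) = adjmx A - adjmx B.
Proof. by rewrite adjmxD adjmxN. Qed.

Lemma adjmx0 m n : adjmx (0 : 'M[C]_(m, n)) = 0.
Proof. by apply/matrixP => i j; rewrite !mxE rmorph0. Qed.

Lemma adjmx1 n : adjmx (1%:M : 'M[C]_n) = 1%:M.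
Proof. by apply/matrixP => i j; rewrite adjmxE !mxE eq_sym rmorph_nat. Qed.

Lemma adjmx_tc n (A : 'M[C]_n) : A ^t* = adjmx A.
Proof. by apply/matrixP => i j; rewrite adjmxE !mxE. Qed.

Lemma mxtrace_adj n (A : 'M[C]_n) : \tr (adjmx A) = (\tr A)^*.
Proof. rewrite /mxtrace rmorph_sum; apply: eq_bigr => i _; by rewrite adjmxE. Qed.

Lemma tr_normsq m n (A : 'M[C]_(m, n)) :
  \tr (A *m adjmx A) = \sum_i \sum_j `|A i j| ^+ 2.
Proof.
apply: eq_bigr => i _; rewrite mxE; apply: eq_bigr => j _.
by rewrite adjmxE normCK.
Qed.

Lemma normsq_ge0 m n (A : 'M[C]_(m, n)) : 0 <= \tr (A *m adjmx A).
Proof. rewrite tr_normsq sumr_ge0 // => i _; rewrite sumr_ge0 // => j _; by rewrite exprn_ge0. Qed.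

Lemma normsq_eq0 m n (A : 'M[C]_(m, n)) : \tr (A *m adjmx A) = 0 -> A = 0.
Proof.
rewrite tr_normsq => H; apply/matrixP => i j; rewrite mxE.
have H1 := psumr_eq0P (fun i _ => sumr_ge0 _ (fun j _ => exprn_ge0 2 (normr_ge0 (A i j)))) H.
have H2 := psumr_eq0P (fun j _ => exprn_ge0 2 (normr_ge0 (A i j))) (H1 i isT).
by move: (H2 j isT) => /eqP; rewrite expf_eq0 /= normr_eq0 => /eqP.
Qed.

Lemma AAadj_eq0 m n (A : 'M[C]_(m, n)) : A *m adjmx A = 0 -> A = 0.
Proof. by move=> H; apply: normsq_eq0; rewrite H mxtrace0. Qed.

Lemma adjAA_eq0 m n (A : 'M[C]_(m, n)) : adjmx A *m A = 0 -> A = 0.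
Proof. by move=> H; apply: normsq_eq0; rewrite mxtrace_mulC H mxtrace0. Qed.

Lemma rank_adjmx m n (A : 'M[C]_(m, n)) : \rank (adjmx A) = \rank A.
Proof. by rewrite /adjmx mxrank_tr mxrank_map. Qed.

End Adj.
Local Open Scope ring_scope.

Section PM.
Variable R : numDomainType.

Lemma cheb_id (I : finType) (x : I -> R) m :
  \sum_i \sum_j (x i ^+ m.+1 - x j ^+ m.+1) * (x i - x j) =
  2%:R * (#|I|%:R * \sum_i x i ^+ m.+2 - (\sum_i x i ^+ m.+1) * \sum_i x i).
Proof.
set Sx := \sum_i x i; set Sm := \sum_i x i ^+ m.+1; set S1 := \sum_i x i ^+ m.+2.
have E : forall i, \sum_j (x i ^+ m.+1 - x j ^+ m.+1) * (x i - x j) =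
   #|I|%:R * x i ^+ m.+2 - x i ^+ m.+1 * Sx - x i * Sm + S1.
  move=> i.
  rewrite (eq_bigr (fun j => x i ^+ m.+2 - x i ^+ m.+1 * x j - x i * x j ^+ m.+1 + x j ^+ m.+2)); last first.
    by move=> j _; rewrite !exprS; ring.
  rewrite big_split /= !sumrB sumr_const -mulr_natl.
  rewrite -!mulr_sumr -mulr_natl; rewrite -/Sx -/Sm -/S1; ring.
rewrite (eq_bigr _ (fun i _ => E i)).
rewrite big_split /= !sumrB sumr_const -mulr_natl -!mulr_sumr -!mulr_suml -/Sx -/Sm -/S1.
ring.
Qed.


Lemma cheb_term (x y : R) m : 0 <= x -> 0 <= y -> 0 <= (x ^+ m - y ^+ m) * (x - y).
Proof.
move=> x0 y0; have [xy|yx] := real_leP (ger0_real x0) (ger0_real y0).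
  apply: mulr_le0; rewrite subr_le0 //.
  by apply: (@lerXn2r R m x y); rewrite ?nnegrE.
apply: mulr_ge0; rewrite subr_ge0; last exact: ltW.
by apply: (@lerXn2r R m y x); rewrite ?nnegrE // ltW.
Qed.

Lemma cheb (I : finType) (x : I -> R) m : (forall i, 0 <= x i) ->
  (\sum_i x i ^+ m.+1) * (\sum_i x i) <= #|I|%:R * \sum_i x i ^+ m.+2.
Proof.
move=> x0; rewrite -subr_ge0.
have : 0 <= \sum_i \sum_j (x i ^+ m.+1 - x j ^+ m.+1) * (x i - x j).
  by apply: sumr_ge0 => i _; apply: sumr_ge0 => j _; apply: cheb_term.
by rewrite cheb_id pmulr_rge0 // ltr0n.
Qed.

Lemma cheb_eq (I : finType) (x : I -> R) m : (forall i, 0 <= x i) ->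
  (\sum_i x i ^+ m.+1) * (\sum_i x i) = #|I|%:R * \sum_i x i ^+ m.+2 ->
  forall i j, x i = x j.
Proof.
move=> x0 E.
have H : \sum_i \sum_j (x i ^+ m.+1 - x j ^+ m.+1) * (x i - x j) = 0.
  by rewrite cheb_id E subrr mulr0.
have H1 := psumr_eq0P (fun i _ => sumr_ge0 _ (fun j _ => cheb_term m.+1 (x0 i) (x0 j))) H.
move=> i j.
have H2 := psumr_eq0P (fun j _ => cheb_term m.+1 (x0 i) (x0 j)) (H1 i isT).
move: (H2 j isT) => /eqP; rewrite mulf_eq0 !subr_eq0 => /orP[|/eqP //].
by rewrite eqrXn2 // => /eqP.
Qed.

Lemma pmean (I : finType) (x : I -> R) m : (forall i, 0 <= x i) ->
  (\sum_i x i) ^+ m.+1 <= #|I|%:R ^+ m * \sum_i x i ^+ m.+1.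
Proof.
move=> x0; have S0 : 0 <= \sum_i x i by apply: sumr_ge0.
elim: m => [|m IH]; first by rewrite expr0 mul1r; under [X in _ <= X]eq_bigr do rewrite expr1.
rewrite exprSr (le_trans (ler_wpM2r S0 IH)) //.
rewrite -mulrA exprSr -mulrA ler_wpM2l ?exprn_ge0 ?ler0n //.
exact: cheb.
Qed.

Lemma pmean_eq (I : finType) (x : I -> R) m : (forall i, 0 <= x i) ->
  (\sum_i x i) ^+ m.+2 = #|I|%:R ^+ m.+1 * \sum_i x i ^+ m.+2 ->
  forall i j, x i = x j.
Proof.
move=> x0 E i j; have S0 : 0 <= \sum_i x i by apply: sumr_ge0.
have N0 : #|I|%:R ^+ m != 0 :> R.
  rewrite expf_eq0 pnatr_eq0 negb_and; apply/orP; right.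
  by rewrite -lt0n; apply/card_gt0P; exists i.
suff H : (\sum_i x i ^+ m.+1) * (\sum_i x i) = #|I|%:R * \sum_i x i ^+ m.+2.
  exact: (cheb_eq x0 H).
apply: (mulfI N0).
have L1 : #|I|%:R ^+ m * ((\sum_i x i ^+ m.+1) * \sum_i x i) <=
          #|I|%:R ^+ m * (#|I|%:R * \sum_i x i ^+ m.+2).
  by rewrite ler_wpM2l ?exprn_ge0 ?ler0n // cheb.
have L2 : (\sum_i x i) ^+ m.+2 <= #|I|%:R ^+ m * ((\sum_i x i ^+ m.+1) * \sum_i x i).
  by rewrite mulrA exprSr ler_wpM2r // pmean.
apply/eqP; rewrite eq_le L1 /=.
by rewrite (le_trans _ L2) // E exprSr -mulrA.
Qed.

End PM.
Lemma tr_pid (F : fieldType) n r : (r <= n)%N -> \tr (pid_mx r : 'M[F]_n) = r%:R.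
Proof.
move=> hr.
have -> : (pid_mx r : 'M[F]_n) = (pid_mx r : 'M[F]_(n, r)) *m (pid_mx r : 'M[F]_(r, n)).
  by rewrite mul_pid_mx !minnn.
by rewrite mxtrace_mulC mul_pid_mx !minnn (minn_idPr hr) pid_mx_1 mxtrace1.
Qed.

Lemma tr_idem (F : fieldType) n (A : 'M[F]_n) : A *m A = A -> \tr A = (\rank A)%:R.
Proof.
move=> AA.
have eA : col_ebase A *m pid_mx (\rank A) *m row_ebase A = A by exact: mulmx_ebase.
have hr : (\rank A <= n)%N := rank_leq_col A.
move: (col_ebase A) (row_ebase A) (col_ebase_unit A) (row_ebase_unit A) eA.
pose r : nat := \rank A; rewrite -/r in hr *; clearbody r.
move=> L U Lu Uu eA.
have E1 : forall B, invmx L *m (L *m B *m U) *m invmx U = B.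
  by move=> B; rewrite -(mulmxA L) mulKmx // mulmxK.
have D2 : (pid_mx r : 'M[F]_n) *m (pid_mx r : 'M[F]_n) = (pid_mx r : 'M[F]_n).
  by rewrite mul_pid_mx !minnn (minn_idPr hr).
have key : (pid_mx r : 'M[F]_n) *m (U *m L) *m (pid_mx r : 'M[F]_n) = (pid_mx r : 'M[F]_n).
  rewrite -[RHS]E1 eA -AA -eA -[LHS]E1; congr (_ *m _ *m _); rewrite !mulmxA //.
rewrite -eA mxtrace_mulC mulmxA -D2 mulmxA mxtrace_mulC !mulmxA.
by rewrite -(mulmxA (pid_mx r)) key tr_pid.
Qed.

Section MP.
Variable C : numClosedFieldType.

Lemma adjmx_diag n (e : 'rV[C]_n) : adjmx (diag_mx e) = diag_mx (map_mx Num.conj e).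
Proof.
apply/matrixP => i j; rewrite adjmxE !mxE eq_sym rmorphMn.
by case: eqP => // ->.
Qed.

Lemma MP_uniq n (A X Y : 'M[C]_n) :
  is_MP_inverse A X -> is_MP_inverse A Y -> X = Y.
Proof.
case=> [X1 X2 X3 X4] [Y1 Y2 Y3 Y4].
have AXY : A *m X = A *m Y.
  have e1 : A *m X = (A *m Y) *m (A *m X) by rewrite !mulmxA Y1.
  by rewrite e1 -{1}Y3 -{1}X3 -adjmxM !mulmxA X1 Y3.
have XAY : X *m A = Y *m A.
  have e1 : X *m A = (X *m A) *m (Y *m A) by rewrite -!mulmxA [A *m (Y *m A)]mulmxA Y1.
  by rewrite e1 -{1}X4 -{1}Y4 -adjmxM -!mulmxA [A *m (X *m A)]mulmxA X1 Y4.
by rewrite -X2 XAY -mulmxA AXY mulmxA Y2.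
Qed.

Lemma MP_herm n (S X : 'M[C]_n) : adjmx S = S -> is_MP_inverse S X -> adjmx X = X.
Proof.
move=> hS hX; have [X1 X2 X3 X4] := hX.
apply: (MP_uniq _ hX); split.
- by rewrite -{1 2}hS -!adjmxM mulmxA X1 hS.
- by rewrite -hS -!adjmxM mulmxA X2.
- by rewrite adjmxM adjmxK hS -X4 adjmxM hS.
- by rewrite adjmxM adjmxK hS -X3 adjmxM hS.
Qed.

Lemma MP_exists n (S : 'M[C]_n) : adjmx S = S -> exists X, is_MP_inverse S X.
Proof.
move=> hS.
have Sn : S \is normalmx by apply/normalmxP; rewrite adjmx_tc hS.
have /orthomx_spectralP E := Sn.
set U := spectralmx S in E; set d := spectral_diag S in E.
have Uu : U \is unitarymx := spectral_unitarymx S.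
have Uunit : U \in unitmx := spectral_unit S.
have iU : invmx U = adjmx U by rewrite invmx_unitary // adjmx_tc.
have UU1 : U *m adjmx U = 1%:M by rewrite -iU mulmxV.
have U1U : adjmx U *m U = 1%:M by rewrite -iU mulVmx.
rewrite iU in E.
pose d' := map_mx GRing.inv d.
exists (adjmx U *m diag_mx d' *m U).
have M3 : forall a b c : 'M[C]_n, adjmx U *m a *m U *m (adjmx U *m b *m U) *m (adjmx U *m c *m U)
   = adjmx U *m (a *m b *m c) *m U.
  move=> a b c; rewrite !mulmxA -(mulmxA _ U) UU1 mulmx1 -(mulmxA _ U) UU1 mulmx1 //.
have M2 : forall a b : 'M[C]_n, adjmx U *m a *m U *m (adjmx U *m b *m U)
   = adjmx U *m (a *m b) *m U.
  move=> a b; rewrite !mulmxA -(mulmxA _ U) UU1 mulmx1 //.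
have AD : forall a : 'rV[C]_n, adjmx (adjmx U *m diag_mx a *m U) = adjmx U *m diag_mx (map_mx Num.conj a) *m U.
  by move=> a; rewrite !adjmxM adjmxK adjmx_diag mulmxA.
have hdd : forall x : C, x * x^-1 * x = x.
  by move=> x; have [->|x0] := eqVneq x 0; rewrite ?mulr0 ?mul0r // mulfV // mul1r.
have hdd' : forall x : C, x^-1 * x * x^-1 = x^-1.
  by move=> x; have [->|x0] := eqVneq x 0; rewrite ?invr0 ?mulr0 ?mul0r // mulVf // mul1r.
have hc : forall x : C, (x * x^-1)^* = x * x^-1.
  by move=> x; have [->|x0] := eqVneq x 0; rewrite ?mul0r ?rmorph0 // mulfV // rmorph1.
have hc' : forall x : C, (x^-1 * x)^* = x^-1 * x.
  by move=> x; rewrite mulrC hc.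
split.
- rewrite E M3 !mulmx_diag; congr (_ *m diag_mx _ *m _); apply/rowP => j; rewrite !mxE hdd //.
- rewrite E M3 !mulmx_diag; congr (_ *m diag_mx _ *m _); apply/rowP => j; rewrite !mxE hdd' //.
- rewrite E M2 mulmx_diag AD; congr (_ *m diag_mx _ *m _); apply/rowP => j; rewrite !mxE hc //.
- rewrite E M2 mulmx_diag AD; congr (_ *m diag_mx _ *m _); apply/rowP => j; rewrite !mxE hc' //.
Qed.

End MP.
Section Frame.
Variable C : numClosedFieldType.
Variables n N : nat.
Variables (W V : 'M[C]_n) (w v : 'I_N -> 'rV[C]_n).
Hypothesis hcap : (W :&: orthmx V = 0)%MS.
Hypothesis hsum : (W + orthmx V == 1%:M)%MS.
Hypothesis hfw : is_frame W w.
Hypothesis hdual : is_oblique_dual W V w v.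

Local Notation Wm := (\matrix_(i < N) w i).
Local Notation Vm := (\matrix_(i < N) v i).

Lemma ipE (x y : 'rV[C]_n) : ip x y = (x *m adjmx y) 0 0.
Proof. by rewrite /ip mxE; apply: eq_bigr => k _; rewrite adjmxE. Qed.

Lemma GE i j : (Wm *m adjmx Vm) i j = ip (w i) (v j).
Proof. by rewrite /ip !mxE; apply: eq_bigr => k _; rewrite adjmxE !mxE. Qed.

Lemma fVE (f : 'rV[C]_n) j : (f *m adjmx Vm) 0 j = ip f (v j).
Proof. by rewrite /ip !mxE; apply: eq_bigr => k _; rewrite adjmxE !mxE. Qed.

Lemma PE : oblique_proj W V = adjmx Vm *m Wm.
Proof.
apply/row_matrixP => i; rewrite !rowE (proj2 hdual) mulmxA.
apply/rowP => k; rewrite summxE !mxE; apply: eq_bigr => j _.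
by rewrite fVE !mxE.
Qed.

Lemma SE : frame_op w = adjmx Wm *m Wm.
Proof.
apply/matrixP => a b; rewrite summxE !mxE; apply: eq_bigr => i _.
by rewrite [in LHS]mxE big_ord1 !adjmxE !mxE.
Qed.

Lemma WmW : (Wm <= W)%MS.
Proof. by case/andP: hfw. Qed.

Lemma WWm : (W <= Wm)%MS.
Proof. by case/andP: hfw. Qed.

Lemma WP : Wm *m oblique_proj W V = Wm.
Proof. exact: proj_mx_id hcap WmW. Qed.

Lemma rank_orth (A : 'M[C]_n) : \rank (orthmx A) = (n - \rank A)%N.
Proof. by rewrite /orthmx mxrank_ker rank_adjmx. Qed.

Lemma rankVW : \rank V = \rank W.
Proof.
have := mxrank_sum_cap W (orthmx V).
rewrite hcap mxrank0 (eqmx_rank hsum) mxrank1 rank_orth addn0.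
have := rank_leq_col V; lia.
Qed.

Lemma cap2 : (V :&: orthmx W = 0)%MS.
Proof.
set u := (V :&: orthmx W)%MS.
apply: AAadj_eq0.
have uV : (u <= V)%MS by exact: capmxSl.
have uO : (u <= orthmx W)%MS by exact: capmxSr.
have uW : u *m adjmx W = 0 by apply/sub_kermxP.
have : (u <= W + orthmx V)%MS.
  by apply: submx_trans (submx1 u) _; case/andP: hsum.
case/sub_addsmxP => y eu.
rewrite {1}eu mulmxDl -(mulmxA y.1) -(mulmxA y.2).
have -> : W *m adjmx u = 0 by rewrite -[W]adjmxK -adjmxM uW adjmx0.
case/submxP: uV => z ->.
by rewrite adjmxM (mulmxA (orthmx V)) /orthmx mulmx_ker !mul0mx !mulmx0 addr0.
Qed.

Lemma full2 : (1%:M <= V + orthmx W)%MS.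
Proof.
rewrite sub1mx /row_full mxrank_disjoint_sum ?cap2 // rank_orth rankVW.
by rewrite subnKC ?rank_leq_col.
Qed.

Lemma PiW : oblique_proj V W *m adjmx Wm = adjmx Wm.
Proof.
have h := proj_mx_compl_sub full2.
rewrite mul1mx in h.
have h2 : (1%:M - oblique_proj V W) *m adjmx W = 0 by apply/sub_kermxP.
case/submxP: WmW => y ->.
rewrite adjmxM; apply/eqP; rewrite -subr_eq0 -{2}[adjmx W *m _]mul1mx -mulmxBl.
by rewrite -opprB mulNmx mulmxA h2 mul0mx oppr0.
Qed.

Lemma trG : \tr (Wm *m adjmx Vm) = (\rank W)%:R.
Proof.
rewrite mxtrace_mulC -PE tr_idem; last exact: proj_mx_proj.
congr (_%:R); apply/eqmx_rank/andP; split.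
  by rewrite -[oblique_proj W V]mul1mx proj_mx_sub.
by rewrite -{1}(proj_mx_id hcap (submx_refl W)) submxMl.
Qed.


Local Notation G := (Wm *m adjmx Vm).
Local Notation Pi := (oblique_proj V W).

Lemma F_tr : \sum_i \sum_j `|ip (w i) (v j)| ^+ 2 = \tr (G *m adjmx G).
Proof. by rewrite tr_normsq; apply: eq_bigr => i _; apply: eq_bigr => j _; rewrite GE. Qed.

Section WithX.
Variable X : 'M[C]_n.
Hypothesis hX : is_MP_inverse (adjmx Wm *m Wm) X.

Local Notation S := (adjmx Wm *m Wm).
Local Notation H := (Wm *m X *m adjmx Wm).

Lemma Sh : adjmx S = S.
Proof. by rewrite adjmxM adjmxK. Qed.

Lemma Xh : adjmx X = X.
Proof. exact: MP_herm Sh hX. Qed.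

Lemma WXS : Wm *m X *m S = Wm.
Proof.
have [X1 X2 X3 X4] := hX.
set K : 'M[C]_n := 1%:M - X *m S.
have SK : S *m K = 0 by rewrite /K mulmxBr mulmx1 (mulmxA S X S) X1 subrr.
have : Wm *m K = 0.
  apply: adjAA_eq0.
  by rewrite adjmxM -mulmxA (mulmxA (adjmx Wm)) SK mulmx0.
rewrite /K mulmxBr mulmx1 (mulmxA Wm X S) => /eqP; rewrite subr_eq0 eq_sym => /eqP //.
Qed.

Lemma Hh : adjmx H = H.
Proof. by rewrite !adjmxM adjmxK Xh mulmxA. Qed.

Lemma GH : G *m H = H.
Proof.
rewrite !mulmxA -(mulmxA Wm (adjmx Vm)) -PE WP //.
Qed.

Lemma HG : H *m G = G.
Proof.
by rewrite !mulmxA -(mulmxA (Wm *m X)) WXS.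
Qed.

Lemma HH : H *m H = H.
Proof.
have [X1 X2 X3 X4] := hX.
by rewrite !mulmxA -(mulmxA (Wm *m X)) WXS.
Qed.

Lemma trH : \tr H = (\rank W)%:R.
Proof. by rewrite -GH mxtrace_mulC HG trG. Qed.

Lemma Fdecomp : \tr (G *m adjmx G) = (\rank W)%:R + \tr ((G - H) *m adjmx (G - H)).
Proof.
rewrite adjmxB Hh mulmxBl !mulmxBr !raddfB /=.
rewrite GH HH.
have -> : H *m adjmx G = adjmx (G *m H) by rewrite [RHS]adjmxM Hh.
rewrite GH Hh trH.
by rewrite subrr addr0 addrC subrK.
Qed.

Lemma F_eq : \tr (G *m adjmx G) = (\rank W)%:R <-> G = H.
Proof.
rewrite Fdecomp; split => [E|->].
  apply/eqP; rewrite -subr_eq0; apply/eqP; apply: normsq_eq0.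
  by move/eqP: E; rewrite addrC -subr_eq0 addrK => /eqP.
by rewrite subrr mul0mx mxtrace0 addr0.
Qed.

Lemma herm_eq : adjmx G = G <-> G = H.
Proof.
split => [E|->]; last exact: Hh.
have e1 : adjmx (G *m H) = G by rewrite adjmxM Hh E HG.
by rewrite -e1 GH Hh.
Qed.

Lemma v_of_herm : G = H -> forall j, v j = w j *m X *m Pi.
Proof.
move=> GeH.
set D := Vm - Wm *m X *m Pi.
have DV : (D <= V)%MS.
  rewrite addmx_sub ?eqmx_opp ?proj_mx_sub //.
  by case/andP: (proj1 hdual).
have DO : (D <= orthmx W)%MS.
  apply/sub_kermxP; case/submxP: WWm => y ->.
  rewrite adjmxM mulmxA; suff -> : D *m adjmx Wm = 0 by rewrite mul0mx.
  rewrite /D mulmxBl -(mulmxA _ Pi) PiW.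
  have -> : Vm *m adjmx Wm = adjmx G by rewrite adjmxM adjmxK.
  by rewrite GeH Hh subrr.
have D0 : D = 0.
  by apply/eqP; rewrite -submx0 -cap2 sub_capmx DV DO.
move=> j; move/eqP: D0; rewrite subr_eq0 => /eqP D0.
by rewrite -(rowK v j) D0 !row_mul rowK.
Qed.

End WithX.

Lemma herm_of_v X' : is_MP_inverse (adjmx Wm *m Wm) X' ->
  (forall j, v j = w j *m X' *m Pi) -> adjmx G = G.
Proof.
move=> hX' hv.
have eV : Vm = Wm *m X' *m Pi.
  by apply/row_matrixP => j; rewrite rowK hv !row_mul rowK.
have Xh' := Xh hX'.
have WPi : Wm *m adjmx Pi = Wm by rewrite -[Wm in RHS]adjmxK -PiW adjmxM adjmxK.
have eG : G = Wm *m X' *m adjmx Wm.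
  by rewrite eV adjmxM (adjmxM Wm X') Xh' (mulmxA Wm (adjmx Pi)) WPi mulmxA.
by rewrite eG !adjmxM adjmxK Xh' mulmxA.
Qed.

End Frame.
Section Fin.
Variable C : numClosedFieldType.
Variables n N : nat.
Variables (W V : 'M[C]_n) (w v : 'I_N -> 'rV[C]_n).
Hypothesis hcap : (W :&: orthmx V = 0)%MS.
Hypothesis hsum : (W + orthmx V == 1%:M)%MS.
Hypothesis hfw : is_frame W w.
Hypothesis hdual : is_oblique_dual W V w v.

Lemma exX0 : exists X, is_MP_inverse (adjmx (\matrix_(i < N) w i) *m (\matrix_(i < N) w i)) X.
Proof. exact: MP_exists (Sh w). Qed.

Lemma struct_iff :
  \sum_i \sum_j `|ip (w i) (v j)| ^+ 2 = (\rank W)%:R <->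
  exists X : 'M[C]_n, is_MP_inverse (frame_op w) X /\
     forall j, v j = w j *m X *m oblique_proj V W.
Proof.
have [X0 hX0] := exX0.
rewrite SE F_tr (F_eq hcap hfw hdual hX0) -(herm_eq hcap hfw hdual hX0).
split => [h | [X [hX hv]]].
  exists X0; split => //.
  by move=> j; apply: (v_of_herm hcap hsum hfw hdual hX0 (proj1 (herm_eq hcap hfw hdual hX0) h) j).
exact: (herm_of_v hcap hsum hfw hX) hv.
Qed.

Lemma F_ge : (\rank W)%:R <= \sum_i \sum_j `|ip (w i) (v j)| ^+ 2.
Proof.
have [X0 hX0] := exX0.
by rewrite F_tr (Fdecomp hcap hfw hdual hX0) lerDl normsq_ge0.
Qed.

Lemma tra : \sum_i ip (w i) (v i) = (\rank W)%:R.
Proof. by rewrite -(trG hcap hdual); apply: eq_bigr => i _; rewrite GE. Qed.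

End Fin.

Lemma divr_iff (C : numClosedFieldType) (z y s : C) : z != 0 -> (s = z^-1 * y <-> z * s = y).
Proof.
move=> z0; split => [->|<-]; first by rewrite mulVKf.
by rewrite mulKf.
Qed.

Theorem corollary3p4 (C : numClosedFieldType) (n N k : nat)
  (W V : 'M[C]_n) (w v : 'I_N -> 'rV[C]_n) :
  (W :&: orthmx V = 0)%MS ->
  (W + orthmx V == 1%:M)%MS ->
  is_frame W w ->
  is_oblique_dual W V w v ->
  (1 <= k)%N ->
  let p := (2 * k)%N in
  let dW := \rank W in
  let S := frame_op w in
  let s1 := \sum_(i < N) `|ip (w i) (v i)| ^+ p in
  let s2 := \sum_(i < N) \sum_(j < N) `|ip (w i) (v j)| ^+ p in
  let b1 := (N%:R : C) ^ (1 - p%:Z) * dW%:R ^+ p in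
  let b2 := (N%:R : C) ^ (2 - p%:Z) * dW%:R ^+ k in
  [/\ b1 <= s1, b2 <= s2,
      (1 < k)%N -> (s1 = b1 <-> forall i, ip (w i) (v i) = dW%:R / N%:R) &
      (1 < k)%N ->
        (s2 = b2 <->
          (exists c : C, forall i j, `|ip (w i) (v j)| = c) /\
          (exists X : 'M[C]_n, is_MP_inverse S X /\
             forall j, v j = w j *m X *m oblique_proj V W))].
Proof.
move=> hcap hsum hfw hdual.
case: k => [//|k'] _; cbv zeta.
have Htra := tra hcap hdual.
have HFge := F_ge hcap hfw hdual.
have Hst := struct_iff hcap hsum hfw hdual.
have e1 : (1 - (2 * k'.+1)%N%:Z)%R = - ((2 * k').+1)%:Z by lia.
have e2 : (2 - (2 * k'.+1)%N%:Z)%R = - (2 * k')%:Z by lia.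
rewrite e1 e2 -!exprnN.
have hp : (2 * k'.+1 = (2 * k').+2)%N by lia.
have [N0|Npos] := posnP N.
  subst N.
  have dW0 : \rank W = 0%N by apply/eqP; rewrite -(pnatr_eq0 C) -Htra big_ord0.
  rewrite dW0 !big_ord0 !expr0n /= !mulr0.
  split => // _.
    by split => // _ i; case: i.
  split => // _; split; first by exists 0 => i; case: i.
  by apply/Hst; rewrite big_ord0 dW0.
have Nr : (0 : C) < N%:R by rewrite ltr0n.
have N0 : (N%:R : C) != 0 by rewrite gt_eqF.
set dW := \rank W in Htra HFge Hst *.
have x0 : forall i, 0 <= `|ip (w i) (v i)| by move=> i; exact: normr_ge0.
have Sx : dW%:R <= \sum_i `|ip (w i) (v i)|.
  by rewrite -[X in X <= _]normr_nat -Htra ler_norm_sum.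
have dW0 : (0 : C) <= dW%:R by exact: ler0n.
have L1 := @pmean _ _ (fun i => `|ip (w i) (v i)|) (2 * k').+1 x0.
rewrite card_ord in L1.
have L0 : dW%:R ^+ (2 * k').+2 <= (\sum_i `|ip (w i) (v i)|) ^+ (2 * k').+2.
  by apply: lerXn2r; rewrite // nnegrE (le_trans dW0 Sx).
pose y := fun q : 'I_N * 'I_N => `|ip (w q.1) (v q.2)| ^+ 2.
have y0 : forall q, 0 <= y q by move=> q; exact: exprn_ge0.
have Es2 : \sum_i \sum_j `|ip (w i) (v j)| ^+ (2 * k'.+1) = \sum_q y q ^+ k'.+1.
  by rewrite pair_bigA; apply: eq_bigr => q _; rewrite exprM.
have EF : \sum_i \sum_j `|ip (w i) (v j)| ^+ 2 = \sum_q y q.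
  by rewrite pair_bigA.
have L2 := @pmean _ _ y k' y0.
rewrite card_prod card_ord natrM in L2.
have ENN : (N%:R : C) ^+ (2 * k') = (N%:R * N%:R) ^+ k' by rewrite exprM expr2.
have L3 : dW%:R ^+ k'.+1 <= (\sum_q y q) ^+ k'.+1.
  apply: lerXn2r => //; rewrite ?nnegrE ?sumr_ge0 // -EF; exact: HFge.
split.
- rewrite ler_pdivrMl ?exprn_gt0 // hp.
  by apply: (le_trans L0); rewrite (le_trans L1).
- rewrite ler_pdivrMl ?exprn_gt0 // Es2 ENN.
  by apply: (le_trans L3).
- move=> _; rewrite divr_iff ?expf_neq0 // hp.
  split => [E | hc].
    have E1 : (\sum_i `|ip (w i) (v i)|) ^+ (2 * k').+2 =
        #|'I_N|%:R ^+ (2 * k').+1 * \sum_i `|ip (w i) (v i)| ^+ (2 * k').+2.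
      by rewrite card_ord; apply/eqP; rewrite eq_le L1 /= E L0.
    have Exeq := pmean_eq x0 E1.
    have ES : \sum_i `|ip (w i) (v i)| = dW%:R.
      apply/eqP; rewrite -(@eqrXn2 _ (2 * k').+2) ?sumr_ge0 //.
      by rewrite E1 card_ord E.
    move=> i.
    have Fi := normC_sum_upper (P := xpredT) (F := fun i => ip (w i) (v i))
       (G := fun i => `|ip (w i) (v i)|) (fun i _ => lexx _).
    rewrite Fi //; last by rewrite Htra ES.
    have : \sum_j `|ip (w j) (v j)| = N%:R * `|ip (w i) (v i)|.
      rewrite (eq_bigr (fun _ => `|ip (w i) (v i)|)); last by move=> j _; rewrite (Exeq j i).
      by rewrite sumr_const card_ord mulr_natl.
    by rewrite ES => ->; rewrite mulrC mulKf.
  rewrite (eq_bigr (fun _ => (dW%:R / N%:R) ^+ (2 * k').+2)); last first.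
    by move=> i _; rewrite hc ger0_norm // divr_ge0 // ler0n.
  rewrite sumr_const card_ord -(mulr_natl ((dW%:R / N%:R) ^+ (2 * k').+2) N).
  by rewrite expr_div_n mulrA -exprSr mulrC divfK // expf_neq0.

- move=> hk1.
  have [k'' ek] : exists k'', k' = k''.+1 by exists k'.-1; lia.
  subst k'.
  rewrite divr_iff ?expf_neq0 // Es2 ENN.
  split => [E | [[c hc] /Hst hF]].
    have E3 : (\sum_q y q) ^+ k''.+2 = #|{: 'I_N * 'I_N}|%:R ^+ k''.+1 * \sum_q y q ^+ k''.+2.
      by rewrite card_prod card_ord natrM; apply/eqP; rewrite eq_le L2 /= E L3.
    have Yeq := pmean_eq y0 E3.
    split.
      exists `|ip (w (Ordinal Npos)) (v (Ordinal Npos))| => i j.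
      have := Yeq (i, j) (Ordinal Npos, Ordinal Npos); rewrite /y /= => /eqP.
      by rewrite eqrXn2 // => /eqP.
    apply/Hst; rewrite EF.
    apply/eqP; rewrite -(@eqrXn2 _ k''.+2) ?sumr_ge0 //.
    by rewrite E3 card_prod card_ord natrM E.
  have hy : forall q, y q = c ^+ 2 by move=> q; rewrite /y hc.
  have S1 : \sum_q y q = c ^+ 2 *+ (N * N).
    by rewrite (eq_bigr _ (fun q _ => hy q)) sumr_const card_prod card_ord.
  have S2 : \sum_q y q ^+ k''.+2 = (c ^+ 2) ^+ k''.+2 *+ (N * N).
    rewrite (eq_bigr (fun _ => (c ^+ 2) ^+ k''.+2)); last by move=> q _; rewrite hy.
    by rewrite sumr_const card_prod card_ord.
  rewrite -hF EF S1 S2 -(mulr_natl (c ^+ 2) (N * N)) -(mulr_natl ((c ^+ 2) ^+ k''.+2) (N * N)).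
  by rewrite natrM mulrA -exprSr [RHS]exprMn.
Qed.
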